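(* Let $F:\mathbb{R}^p\to\mathbb{R}^p$ be single-valued, $L$-Lipschitz continuous and $\rho$-co-hypomonotone for some $\rho\ge0$, i.e. $\langle Fx-Fy,x-y\rangle\ge-\rho\|Fx-Fy\|^2$ for all $x,y\in\mathrm{dom}\,F$. Let $\kappa_1,\kappa_2\ge0$, $\beta\in(0,1]$, $\eta>0$, and let $\{(x^k,y^k)\}$ be generated by: start from $x^0\in\mathrm{dom}\,F$, set $x^{-1}=y^{-1}:=x^0$, and for $k\ge0$ $$y^k:=x^k-\tfrac{\eta}{\beta}u^k,\qquad x^{k+1}:=x^k-\eta Fy^k,$$ where $u^k\in\mathbb{R}^p$ satisfies $\|Fx^k-u^k\|^2\le\kappa_1\|Fx^k-Fy^{k-1}\|^2+\kappa_2\|Fx^k-Fx^{k-1}\|^2$. Then for any $s>0$, $\omega\ge0$, $\hat\omega\ge0$ and $k\ge0$, $$\begin{aligned}&\|Fx^{k+1}\|^2+\omega\|Fx^{k+1}-Fy^k\|^2+\hat\omega\|Fx^{k+1}-Fx^k\|^2\le\|Fx^k\|^2\\&\quad-\Big[1-\tfrac{1+s}{s}\Big(\hat\omega+\tfrac{2\rho}{\eta}\Big)\Big]\|Fy^k-Fx^k\|^2+\Big[1+\omega+(1+s)\Big(\hat\omega+\tfrac{2\rho}{\eta}\Big)\Big]\tfrac{L^2\eta^2}{\beta^2}\|\beta Fy^k-u^k\|^2.\end{aligned}$$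
   Context: $F$ is $L$-Lipschitz if $\|Fx-Fy\|\le L\|x-y\|$ for all $x,y$. *)

(* Defs.v *)
(* R^p is modelled as row vectors 'rV[R]_p over a realType R,
   equipped with the Euclidean inner product and norm (defined below; the
   library's default norm on matrices is the sup norm, so we do not use it). *)
From HB Require Import structures.
From mathcomp Require Import all_boot all_order all_algebra.
From mathcomp Require Import reals.
Set Implicit Arguments. Unset Strict Implicit. Unset Printing Implicit Defensive.
Import Order.TTheory GRing.Theory Num.Theory.
Local Open Scope ring_scope.

Definition dotp (R : realType) (p : nat) (x y : 'rV[R]_p) : R :=
  \sum_(i < p) x ord0 i * y ord0 i.

Definition enorm (R : realType) (p : nat) (x : 'rV[R]_p) : R :=
  Num.sqrt (dotp x x).

Definition lipschitz (R : realType) (p : nat) (F : 'rV[R]_p -> 'rV[R]_p) (L : R) :=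
  forall x y, enorm (F x - F y) <= L * enorm (x - y).

Definition co_hypomonotone (R : realType) (p : nat) (F : 'rV[R]_p -> 'rV[R]_p) (rho : R) :=
  forall x y, dotp (F x - F y) (x - y) >= - rho * enorm (F x - F y) ^+ 2.

(* x^{k-1} with the convention x^{-1} := x^0 (likewise y^{-1} := x^0) *)
Definition prev_x (R : realType) (p : nat) (x : nat -> 'rV[R]_p) (k : nat) : 'rV[R]_p :=
  if k is k'.+1 then x k' else x 0%N.
Definition prev_y (R : realType) (p : nat) (x y : nat -> 'rV[R]_p) (k : nat) : 'rV[R]_p :=
  if k is k'.+1 then y k' else x 0%N.

(* Main.v *)
Require Import Defs.
From HB Require Import structures.
From mathcomp Require Import all_boot all_order all_algebra.
From mathcomp Require Import reals.
From mathcomp Require Import ring lra.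
Import Order.TTheory GRing.Theory Num.Theory.
Local Open Scope ring_scope.

Section Dot.
Variables (R : realType) (p : nat).
Implicit Types (x y z : 'rV[R]_p).

Lemma dotpC x y : dotp x y = dotp y x.
Proof. by apply: eq_bigr => i _; rewrite mulrC. Qed.

Lemma dotpDl x y z : dotp (x + y) z = dotp x z + dotp y z.
Proof. by rewrite /dotp -big_split; apply: eq_bigr => i _; rewrite mxE mulrDl. Qed.

Lemma dotpZl (k : R) x y : dotp (k *: x) y = k * dotp x y.
Proof. by rewrite /dotp mulr_sumr; apply: eq_bigr => i _; rewrite mxE mulrA. Qed.

Lemma dotpNl x y : dotp (- x) y = - dotp x y.
Proof. by rewrite -scaleN1r dotpZl mulN1r. Qed.

Lemma dotpNr x y : dotp y (- x) = - dotp y x.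
Proof. by rewrite dotpC dotpNl dotpC. Qed.

Lemma dotpBl x y z : dotp (x - y) z = dotp x z - dotp y z.
Proof. by rewrite dotpDl dotpNl. Qed.

Lemma dotpDr x y z : dotp z (x + y) = dotp z x + dotp z y.
Proof. by rewrite dotpC dotpDl !(dotpC z). Qed.

Lemma dotpZr (k : R) x y : dotp y (k *: x) = k * dotp y x.
Proof. by rewrite dotpC dotpZl dotpC. Qed.

Lemma dotpBr x y z : dotp z (x - y) = dotp z x - dotp z y.
Proof. by rewrite dotpC dotpBl !(dotpC z). Qed.

Lemma dotp_ge0 x : 0 <= dotp x x.
Proof. by apply: sumr_ge0 => i _; rewrite -expr2 sqr_ge0. Qed.

Lemma enorm_sq x : enorm x ^+ 2 = dotp x x.
Proof. by rewrite /enorm sqr_sqrtr // dotp_ge0. Qed.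

Lemma enorm_ge0 x : 0 <= enorm x.
Proof. exact: sqrtr_ge0. Qed.
End Dot.
Arguments dotpC {R p}.
Arguments dotpNr {R p}.
Arguments dotpDl {R p}.
Arguments dotpZl {R p}.
Arguments dotpNl {R p}.
Arguments dotpBl {R p}.
Arguments dotpDr {R p}.
Arguments dotpZr {R p}.
Arguments dotpBr {R p}.
Arguments dotp_ge0 {R p}.
Arguments enorm_sq {R p}.
Arguments enorm_ge0 {R p}.
Lemma key (R : realType) (xx yy xy xb yb bb E K s om oh rho eta : R) :
  0 < s -> 0 <= om -> 0 <= oh -> 0 <= rho -> 0 < eta ->
  xx <= K * E -> eta * (xb + yb) <= rho * (xx + 2 * xy + yy) ->
  0 <= s ^+ 2 * xx - 2 * s * xy + yy ->
  (xx + 2 * xb + bb) + om * xx + oh * (xx + 2 * xy + yy)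
  <= (bb - 2 * yb + yy) - (1 - (1 + s) / s * (oh + 2 * rho / eta)) * yy
     + (1 + om + (1 + s) * (oh + 2 * rho / eta)) * K * E.
Proof.
move=> hs hom hoh hrho heta hL hco hy.
set T := xx + 2 * xy + yy.
set M := oh + 2 * rho / eta.
have hM : 0 <= M.
  rewrite /M addr_ge0 // divr_ge0 ?(ltW heta) //; lra.
have h1 : 2 * (xb + yb) <= 2 * rho / eta * T.
  have e : eta * (2 * rho / eta * T) = 2 * (rho * T) by field; rewrite gt_eqF.
  by rewrite -(ler_pM2l heta) e mulrCA ler_pM2l.
have h2 : T <= (1 + s) * xx + (1 + s) / s * yy.
  have e : s * ((1 + s) * xx + (1 + s) / s * yy) = s * (1+s) * xx + (1 + s) * yy.
    by field; rewrite gt_eqF.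
  rewrite -(ler_pM2l hs) e /T; lra.
have h3 : M * T <= M * ((1 + s) * xx + (1 + s) / s * yy) by rewrite ler_wpM2l.
have h4 : (1 + om + (1 + s) * M) * xx <= (1 + om + (1 + s) * M) * (K * E).
  apply: ler_wpM2l => //.
  have : 0 <= (1 + s) * M by apply: mulr_ge0 => //; lra.
  lra.
rewrite -/M -/T -mulrA.
have e5 : oh * T + 2 * rho / eta * T = M * T by rewrite /M; ring.
lra.
Qed.
Arguments key {R xx yy xy xb yb bb E K s om oh rho eta}.

Theorem lemma3 (R : realType) (p : nat) (F : 'rV[R]_p -> 'rV[R]_p)
  (L rho kappa1 kappa2 beta eta : R)
  (x y u : nat -> 'rV[R]_p)
  (HL : lipschitz F L)
  (hrho : 0 <= rho) (Hco : co_hypomonotone F rho)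
  (hk1 : 0 <= kappa1) (hk2 : 0 <= kappa2)
  (hb0 : 0 < beta) (hb1 : beta <= 1) (heta : 0 < eta)
  (Hy : forall k : nat, y k = x k - (eta / beta) *: u k)
  (Hx : forall k : nat, x k.+1 = x k - eta *: F (y k))
  (Hu : forall k : nat,
      enorm (F (x k) - u k) ^+ 2 <=
      kappa1 * enorm (F (x k) - F (prev_y x y k)) ^+ 2
      + kappa2 * enorm (F (x k) - F (prev_x x k)) ^+ 2) :
  forall (s omega omegah : R), 0 < s -> 0 <= omega -> 0 <= omegah ->
  forall k : nat,
    enorm (F (x k.+1)) ^+ 2
    + omega * enorm (F (x k.+1) - F (y k)) ^+ 2
    + omegah * enorm (F (x k.+1) - F (x k)) ^+ 2
    <= enorm (F (x k)) ^+ 2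
       - (1 - (1 + s) / s * (omegah + 2 * rho / eta))
           * enorm (F (y k) - F (x k)) ^+ 2
       + (1 + omega + (1 + s) * (omegah + 2 * rho / eta))
           * (L ^+ 2 * eta ^+ 2 / beta ^+ 2)
           * enorm (beta *: F (y k) - u k) ^+ 2.
Proof.
move=> s om oh hs hom hoh k.
set a := F (x k); set b := F (y k); set c := F (x k.+1).
set e := eta / beta.
have hbne : beta != 0 by rewrite gt_eqF.
have Exy : x k.+1 - y k = e *: (u k - beta *: b).
  have Hy' : x k - y k = e *: u k by rewrite {1}Hy opprB addrC subrK.
  by rewrite Hx addrAC Hy' scalerBr scalerA divfK.
have Exx : x k.+1 - x k = - (eta *: b) by rewrite Hx addrAC subrr add0r.
set X := c - b; set Y := b - a.
have Ec : c = X + b by rewrite /X subrK.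
have Ea : a = b - Y by rewrite /Y opprB addrC subrK.
have Eca : c - a = X + Y by rewrite /X /Y addrA subrK.
set E := dotp (beta *: b - u k) (beta *: b - u k).
have hL : dotp X X <= (L ^+ 2 * eta ^+ 2 / beta ^+ 2) * E.
  have H := HL (x k.+1) (y k).
  have := ler_pM (enorm_ge0 _) (enorm_ge0 _) H H.
  rewrite -!expr2 exprMn !enorm_sq Exy dotpZl dotpZr -/X.
  have -> : dotp (u k - beta *: b) (u k - beta *: b) = E.
    by rewrite /E -(opprB (beta *: b)) dotpNl dotpC dotpNl opprK.
  have -> : L ^+ 2 * eta ^+ 2 / beta ^+ 2 = L ^+ 2 * (e * e) by rewrite /e; field.
  by rewrite !mulrA.
clearbody X Y.
have hco : eta * (dotp X b + dotp Y b) <= rho * (dotp X X + 2 * dotp X Y + dotp Y Y).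
  have := Hco (x k.+1) (x k).
  rewrite Exx -/a -/c enorm_sq Eca dotpC dotpNl dotpZl.
  rewrite !dotpDl !dotpDr ?(dotpC Y X) ?(dotpC b X) ?(dotpC b Y); lra.
have hy : 0 <= s ^+ 2 * dotp X X - 2 * s * dotp X Y + dotp Y Y.
  have := dotp_ge0 (s *: X - Y).
  rewrite !dotpBl !dotpBr !dotpZl !dotpZr ?(dotpC Y X); lra.
have K := key hs hom hoh hrho heta hL hco hy.
rewrite !enorm_sq -/E; clearbody E; have := K (dotp b b).
rewrite Eca Ec Ea -/X.
rewrite !dotpDl !dotpDr ?dotpBl ?dotpBr ?dotpNl ?dotpNr ?(dotpC Y X) ?(dotpC b X) ?(dotpC b Y).
lra.
Qed.
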